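(* Let $(G,H)$ be a discrete Hecke pair which has a finite generating set $S$. If $(G,H)$ is of subexponential growth (with respect to a length function $l$ on $(G,H)$), then $(G,H)$ is amenable.
   Context: A discrete Hecke pair is a group $G$ with a subgroup $H$ such that $[H:H\cap xHx^{-1}]<\infty$ for all $x$. $S\subseteq G$ generates $(G,H)$ if $H\backslash G=\bigcup_nH\hat S^n$, $\hat S=S\cup S^{-1}\cup\{e\}$. A length function on $(G,H)$ is $l:G\to[0,\infty)$ with $l(e)=0$, $l(g)=l(g^{-1})$, $l(gh)\le l(g)+l(h)$ and $l|_H=0$. Its growth function is $\mathcal G_l(r)=\#\{Hx\in H\backslash G: l(x)\le r\}$. $(G,H)$ has subexponential growth with respect to $l$ if $\mathcal G_l(r)<\infty$ for all $r\ge0$ and $\lim_{r\to\infty}\frac{\ln\mathcal G_l(r)}{r}=0$. The pair $(G,H)$ is amenable if whenever $G$ acts continuously by affine transformations on a compact convex subset $Q$ of a locally convex topological vector space and the restricted action of $H$ has a fixed point in $Q$, the action of $G$ has a fixed point in $Q$. *)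

(* Defs.v *)
From HB Require Import structures.
From mathcomp Require Import all_boot all_order all_algebra.
From mathcomp Require Import finmap.
From mathcomp Require Import all_classical all_reals all_analysis.
Set Implicit Arguments. Unset Strict Implicit. Unset Printing Implicit Defensive.
Import Order.TTheory GRing.Theory Num.Theory numFieldNormedType.Exports.
Local Open Scope classical_set_scope.
Local Open Scope ring_scope.

Section HeckeDefs.
Variable G : groupType.

Definition is_subgroup (H : set G) : Prop :=
  H 1%g /\ (forall x y, H x -> H y -> H (x * y)%g) /\ (forall x, H x -> H (x^-1)%g).

Definition rcoset (H : set G) (x : G) : set G := [set (h * x)%g | h in H].
Definition lcoset (x : G) (K : set G) : set G := [set (x * k)%g | k in K].

Definition conj_inter (H : set G) (x : G) : set G :=
  H `&` [set (x * h * x^-1)%g | h in H].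

(* [H : H ∩ x H x^{-1}] < oo for all x *)
Definition hecke_pair (H : set G) : Prop :=
  is_subgroup H /\
  forall x : G, finite_set [set C | exists2 h, H h & C = lcoset h (conj_inter H x)].

Definition symm_hat (S : set G) : set G :=
  S `|` [set (s^-1)%g | s in S] `|` [set 1%g].

Definition word_pow (T : set G) (n : nat) : set G :=
  [set x | exists s : seq G,
     [/\ size s = n, (forall y, y \in s -> T y) & x = (\prod_(y <- s) y)%g]].

Definition generates_pair (H S : set G) : Prop :=
  forall x : G, exists n, exists2 w, word_pow (symm_hat S) n w & rcoset H x = rcoset H w.

Variable R : realType.

Definition length_function (H : set G) (l : G -> R) : Prop :=
  [/\ l 1%g = 0,
      (forall g, 0 <= l g),
      (forall g, l (g^-1)%g = l g),
      (forall g h, l (g * h)%g <= l g + l h) &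
      (forall h, H h -> l h = 0)].

Definition ball_cosets (H : set G) (l : G -> R) (r : R) : set (set G) :=
  [set C | exists2 x, l x <= r & C = rcoset H x].

(* growth function G_l(r) (meaningful when the set above is finite) *)
Definition growth (H : set G) (l : G -> R) (r : R) : nat :=
  (#|` fset_set (ball_cosets H l r)|)%fset.

Definition subexponential_growth (H : set G) (l : G -> R) : Prop :=
  (forall r, 0 <= r -> finite_set (ball_cosets H l r)) /\
  (fun r => ln ((growth H l r)%:R) / r) @ +oo --> (0 : R).

Definition affine_on (E : tvsType R) (Q : set E) (f : E -> E) : Prop :=
  forall x y (t : R), Q x -> Q y -> 0 <= t <= 1 ->
    f (t *: x + (1 - t) *: y) = t *: f x + (1 - t) *: f y.

Definition affine_action (E : tvsType R) (Q : set E) (a : G -> E -> E) : Prop :=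
  [/\ (forall g x, Q x -> Q (a g x)),
      (forall x, Q x -> a 1%g x = x),
      (forall g h x, Q x -> a (g * h)%g x = a g (a h x)),
      (forall g, {within Q, continuous (a g)}) &
      (forall g, affine_on Q (a g))].

Definition amenable_pair (H : set G) : Prop :=
  forall (E : tvsType R), hausdorff_space E ->
  forall (Q : set E), compact Q -> convex_set (Q : set (convex_lmodType E)) ->
  forall a : G -> E -> E, affine_action Q a ->
  (exists2 q, Q q & forall h, H h -> a h q = q) ->
  exists2 q, Q q & forall g, a g q = q.

End HeckeDefs.

(* Main.v *)
Set Warnings "-all".
Require Import Defs.
From HB Require Import structures.
From mathcomp Require Import all_boot all_order all_algebra finmap.
From mathcomp Require Import all_classical all_reals all_analysis.
From mathcomp Require Import ring lra.
Import Order.TTheory GRing.Theory Num.Theory numFieldNormedType.Exports.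
Set Implicit Arguments. Unset Strict Implicit. Unset Printing Implicit Defensive.
Local Open Scope classical_set_scope.
Local Open Scope ring_scope.

Lemma ultra_lim (T : topologicalType) (I : Type) (U : set_system I)
  (UU : UltraFilter U) (Q : set T) (f : I -> T) :
  compact Q -> (forall n, Q (f n)) -> exists2 x, Q x & f @ U --> x.
Proof.
move=> cQ Qf.
have PF : ProperFilter (f @ U) by apply: fmap_proper_filter.
have FQ : (f @ U) Q.
  by rewrite /fmap /=; apply: (@filterE _ U) => n; exact: Qf.
have [x [Qx clx]] := cQ _ PF FQ.
exists x => // A Ax.
case: (in_ultra_setVsetC (f @^-1` A) UU) => // HC.
have : (f @ U) (~` A) by [].
move=> FC; have [y [/= nAy Ay]] := clx _ _ FC Ax.
by [].
Qed.

Lemma tvs_cvgD (R : numDomainType) (E : tvsType R) (I : Type) (F : set_system I)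
  (FF : Filter F) (f g : I -> E) a b :
  f @ F --> a -> g @ F --> b -> (fun x => f x + g x) @ F --> a + b.
Proof.
move=> fa gb; apply: (@continuous2_cvg _ _ _ _ F FF _ _ (fun x y : E => x + y)) => //.
exact: (@add_continuous E (a, b)).
Qed.

Lemma tvs_cvgB (R : numDomainType) (E : tvsType R) (I : Type) (F : set_system I)
  (FF : Filter F) (f g : I -> E) a b :
  f @ F --> a -> g @ F --> b -> (fun x => f x - g x) @ F --> a - b.
Proof.
move=> fa gb; apply: (@continuous2_cvg _ _ _ _ F FF _ _ (fun x y : E => x - y)) => //.
exact: (@sub_continuous E (a, b)).
Qed.

Lemma tvs_cvgZ (R : numDomainType) (E : tvsType R) (I : Type) (F : set_system I)
  (FF : Filter F) (t : I -> R^o) (f : I -> E) (k : R^o) (a : E) :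
  t @ F --> k -> f @ F --> a -> (fun x => t x *: f x) @ F --> k *: a.
Proof.
move=> fa gb; apply: (@continuous2_cvg _ _ _ _ F FF _ _ (fun (x : R^o) (y : E) => x *: y)) => //.
exact: (@scale_continuous R E (k, a)).
Qed.

Lemma fix_lemma (R : realType) (E : tvsType R) (hE : hausdorff_space E)
  (Q : set E) (cQ : compact Q) (b : E -> E) (bc : {within Q, continuous b})
  (U : set_system nat) (UU : UltraFilter U) (q : nat -> E) (p : E)
  (Qq : forall n, Q (q n)) (Qp : Q p) (qp : q @ U --> p)
  (t : nat -> R) (u v : nat -> E) (Qu : forall n, Q (u n)) (Qv : forall n, Q (v n))
  (t0 : t @ U --> (0 : R^o))
  (hb : \forall n \near U, b (q n) = q n + t n *: (u n - v n)) : b p = p.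
Proof.
have [us Qus uus] := @ultra_lim _ _ U UU Q _ cQ Qu.
have [vs Qvs vvs] := @ultra_lim _ _ U UU Q _ cQ Qv.
have L1 : (fun n => q n + t n *: (u n - v n)) @ U --> p + (0 : R^o) *: (us - vs).
  apply: tvs_cvgD => //; apply: tvs_cvgZ => //; exact: tvs_cvgB.
rewrite scale0r addr0 in L1.
have L2 : (fun n => b (q n)) @ U --> b p.
  have H := (proj1 (@subspace_continuousP _ Q _ b) bc p Qp).
  apply: (cvg_comp q b (G := within Q (nbhs p))) H.
  move=> A /=; rewrite /within => hA.
  have := qp _ hA; apply: (@filterS _ U) => n /= H1; exact: (H1 (Qq n)).
have L3 : (fun n => q n + t n *: (u n - v n)) @ U --> b p.
  apply: cvg_trans L2; apply: near_eq_cvg; near=> n.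
  by rewrite (near hb n).
have PF : ProperFilter ((fun n => q n + t n *: (u n - v n)) @ U).
  exact: fmap_proper_filter.
have := @cvg_unique E hE _ PF; apply; [exact: L3 | exact: L1].
Unshelve. all: by end_near.
Qed.

Definition avg (R : numFieldType) (E : lmodType R) (T : Type) (f : T -> E) (s : seq T) : E :=
  (size s)%:R^-1 *: \sum_(x <- s) f x.

Lemma avg_aux (R : fieldType) (m : R) : m != 0 -> m + 1 != 0 ->
  (m + 1)^-1 = (1 - (m + 1)^-1) / m.
Proof. by move=> m0 m1; field; rewrite m0 m1. Qed.

Lemma avg_cons (R : numFieldType) (E : lmodType R) (T : Type) (f : T -> E) (x : T) (s : seq T) :
  (0 < size s)%N ->
  avg f (x :: s) = (size s).+1%:R^-1 *: f x + (1 - (size s).+1%:R^-1) *: avg f s.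
Proof.
move=> sn; rewrite /avg big_cons scalerDr /=; congr (_ + _).
rewrite scalerA; congr (_ *: _).
have m0 : (size s)%:R != 0 :> R by rewrite pnatr_eq0 -lt0n.
rewrite -addn1 natrD; move: m0; set m : R := (size s)%:R => m0.
have m1 : m + 1 != 0 by rewrite /m -(natrD R _ 1) pnatr_eq0 addn1.
clearbody m; exact: avg_aux.
Qed.

Lemma avg_props (R : realType) (E : tvsType R) (Q : set E)
  (cQ : convex_set (Q : set (convex_lmodType E))) (T : eqType) (f : T -> E) (s : seq T) :
  (0 < size s)%N -> (forall x, x \in s -> Q (f x)) ->
  Q (avg f s) /\ (forall b, affine_on Q b -> b (avg f s) = avg (b \o f) s).
Proof.
elim: s => // x s IH _ Hs.
have Qx : Q (f x) by apply: Hs; rewrite mem_head.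
case: s IH Hs => [|y s] IH Hs.
  split => [|b _]; rewrite /avg /= ?big_cons ?big_nil ?addr0 ?invr1 ?scale1r //.
have sn : (0 < size (y :: s))%N by [].
have [Qa Ab] := IH sn (fun z zs => Hs z (mem_behead (s := x :: y :: s) zs)).
set t := (size (y :: s)).+1%:R^-1 : R.
have t0 : 0 <= t by rewrite invr_ge0.
have t1 : t <= 1 by rewrite invf_le1 // ler1n.
split.
  rewrite (avg_cons f x sn).
  have := cQ (f x) (avg f (y :: s)) (Itv01 t0 t1) (mem_set Qx) (mem_set Qa).
  by rewrite inE.
move=> b bA; rewrite (avg_cons f x sn) (avg_cons (b \o f) x sn) bA //; last by rewrite t0 t1.
by rewrite Ab.
Qed.

Section Cosets.
Variables (R : realType) (G : groupType) (H : set G).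
Hypothesis hH : is_subgroup H.

Lemma rcoset_self (x : G) : rcoset H x x.
Proof. by exists 1%g; [case: hH|rewrite mul1g]. Qed.

Lemma rcoset_eqH (x y : G) : rcoset H x = rcoset H y -> H (x * y^-1)%g.
Proof.
move=> e; have := rcoset_self x; rewrite e => -[h Hh <-].
by rewrite -mulgA mulgV mulg1.
Qed.

Definition rtr (g : G) (C : set G) : set G := [set y | C (y * g)%g].

Lemma rtr_rcoset g x : rtr g (rcoset H x) = rcoset H (x * g^-1)%g.
Proof.
apply/seteqP; split => y /=.
  by move=> [h Hh e]; exists h => //; rewrite mulgA e -mulgA mulgV mulg1.
by move=> [h Hh <-]; exists h => //; rewrite -!mulgA mulVg mulg1.
Qed.

Lemma rtr_inj g : injective (rtr g).
Proof.
move=> C1 C2 e; apply/seteqP; split => z Cz.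
  have : rtr g C1 (z * g^-1)%g by rewrite /rtr /= -mulgA mulVg mulg1.
  by rewrite e /rtr /= -mulgA mulVg mulg1.
have : rtr g C2 (z * g^-1)%g by rewrite /rtr /= -mulgA mulVg mulg1.
by rewrite -e /rtr /= -mulgA mulVg mulg1.
Qed.

Variables (E : tvsType R) (Q : set E) (a : G -> E -> E) (q0 : E).
Hypothesis ha : affine_action Q a.
Hypothesis Qq0 : Q q0.
Hypothesis fixq0 : forall h, H h -> a h q0 = q0.

Definition phi (C : set G) : E := a ((xget 1%g (fun x => C = rcoset H x))^-1)%g q0.

Lemma phiE x : phi (rcoset H x) = a (x^-1)%g q0.
Proof.
rewrite /phi; set y := xget _ _.
have : rcoset H x = rcoset H y by apply: (xgetPex 1%g (P := fun z => rcoset H x = rcoset H z)); exists x.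
move=> /rcoset_eqH Hyx.
case: ha => _ _ hm _ _.
by rewrite -{2}(fixq0 Hyx) -hm // mulgA mulVg mul1g.
Qed.

Lemma phiQ C : Q (phi C).
Proof. by case: ha => hQ _ _ _ _; exact: hQ. Qed.

Lemma phi_rtr g x : phi (rtr g (rcoset H x)) = a g (phi (rcoset H x)).
Proof.
case: ha => _ _ hm _ _.
by rewrite rtr_rcoset !phiE -hm // invgM invgK.
Qed.

Hypothesis cQ : convex_set (Q : set (convex_lmodType E)).

Lemma sum_as_avg (P : {fset (set G)}) :
  exists2 u, Q u & (#|` P|)%:R *: u = \sum_(C <- P) phi C.
Proof.
have [P0|Pn] := posnP #|` P|.
  exists q0 => //; rewrite P0 scale0r.
  by move/size0nil: P0 => ->; rewrite big_nil.
exists (avg phi P).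
  by have [] := avg_props cQ (f := phi) Pn (fun C _ => phiQ C).
rewrite /avg scalerA divff ?scale1r // pnatr_eq0 -lt0n //.
Qed.

Lemma estimate (g : G) (A D : {fset (set G)}) :
  (0 < #|` A|)%N ->
  (forall C, C \in A -> exists x, C = rcoset H x) ->
  (forall C, C \in A -> rtr g C \in D) ->
  (A `<=` D)%fset ->
  exists k : nat, exists u, exists v, [/\ Q u, Q v, (k <= #|` D| - #|` A|)%N &
    a g (avg phi A) = avg phi A + (k%:R / (#|` A|)%:R) *: (u - v)].
Proof.
move=> A0 HA HD AD.
set B := [fset rtr g C | C in A]%fset.
have e1 : a g (avg phi A) = (#|` A|)%:R^-1 *: \sum_(C <- B) phi C.
  have [_ ->] := avg_props cQ (f := phi) A0 (fun C _ => phiQ C); last by case: ha.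
  rewrite /avg; congr (_ *: _).
  rewrite big_imfset /=; last by move=> x y _ _; exact: rtr_inj.
  apply: eq_big_seq => C CA /=.
  by have [x ->] := HA C CA; rewrite phi_rtr.
have sB : \sum_(C <- B) phi C = \sum_(C <- (A `&` B)%fset) phi C + \sum_(C <- (B `\` A)%fset) phi C.
  rewrite (big_fsetID _ (fun C => C \in A) B).
  have -> : [fset x in B | x \in A]%fset = (A `&` B)%fset by apply/fsetP => x; rewrite !inE andbC.
  by have -> : [fset x in B | x \notin A]%fset = (B `\` A)%fset by apply/fsetP => x; rewrite !inE andbC.
have sA : \sum_(C <- A) phi C = \sum_(C <- (A `&` B)%fset) phi C + \sum_(C <- (A `\` B)%fset) phi C.
  rewrite (big_fsetID _ (fun C => C \in B) A).
  have -> : [fset x in A | x \in B]%fset = (A `&` B)%fset by apply/fsetP => x; rewrite !inE.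
  by have -> : [fset x in A | x \notin B]%fset = (A `\` B)%fset by apply/fsetP => x; rewrite !inE andbC.
have cB : #|` B| = #|` A|.
  rewrite card_imfset //=; exact: rtr_inj.
have kk : #|` (A `\` B)%fset| = #|` (B `\` A)%fset|.
  by rewrite !cardfsD cB fsetIC.
have [u Qu hu] := sum_as_avg (B `\` A)%fset.
have [v Qv hv] := sum_as_avg (A `\` B)%fset.
exists #|` (B `\` A)%fset|, u, v; split => //.
  rewrite -cardfsDS //; apply: fsubset_leq_card; apply/fsubsetP => C.
  rewrite !inE => /andP[nCA /imfsetP[C' /= C'A eC]].
  by rewrite nCA eC HD.
rewrite e1 sB /avg sA -hu -kk -hv.
rewrite [_%:R / _]mulrC -scalerA -scalerDr; congr (_ *: _).
by rewrite scalerBr -addrA [_ *: v + _]addrC subrK.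
Qed.

End Cosets.

Lemma growth_step (R : realType) (N : R -> nat)
  (N0 : forall r, 0 <= r -> (0 < N r)%N)
  (hlim : (fun r => ln ((N r)%:R) / r) @ +oo --> (0 : R))
  (c eps : R) (c0 : 0 < c) (e0 : 0 < eps) :
  exists2 r, 0 <= r & ((N (r + c))%:R <= (1 + eps) * (N r)%:R :> R).
Proof.
have [//|nH] := pselect (exists2 r, 0 <= r & ((N (r + c))%:R <= (1 + eps) * (N r)%:R :> R)).
have H r : 0 <= r -> (1 + eps) * (N r)%:R < (N (r + c))%:R.
  by move=> r0; rewrite ltNge; apply/negP => h; apply: nH; exists r.
have ind k : (1 + eps) ^+ k <= (N (k%:R * c))%:R.
  elim: k => [|k IH]; first by rewrite expr0 mul0r ler1n N0.
  rewrite exprS -natr1 [(_ + 1) * c]mulrDl mul1r.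
  apply: (le_trans _ (ltW (H _ _))); last by rewrite mulr_ge0 // ltW.
  by rewrite ler_pM2l // ltr_pwDr.
set d := ln (1 + eps) / c.
have d0 : 0 < d by rewrite divr_gt0 // ln_gt0 // ltr_pwDr.
have := (@cvgr_dist_lt _ _ _ _ _ _ _ hlim d d0) => -[M [_ HM]].
set k := (Num.Def.archi_bound (`|M| / c)).+1.
have kc : M < k%:R * c.
  have := archi_boundP (divr_ge0 (normr_ge0 M) (ltW c0)).
  rewrite ltr_pdivrMr // => h.
  apply: le_lt_trans (ler_norm M) _; apply: lt_le_trans h _.
  by rewrite ler_pM2r // ler_nat.
have := HM _ kc; rewrite sub0r normrN.
have k0 : 0 < k%:R * c :> R by rewrite mulr_gt0 // ltr0n.
have Npos : 0 < (N (k%:R * c))%:R :> R by rewrite ltr0n N0 // ltW.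
rewrite ger0_norm; last by apply: divr_ge0; [rewrite ln_ge0 // ler1n N0 // ltW | exact: ltW].
rewrite ltNge => /negP h; exfalso; apply: h.
rewrite /d ler_pdivlMr // [k%:R * c]mulrC mulrA divfK ?gt_eqF // mulr_natr.
have e1 : 0 < 1 + eps by rewrite ltr_pwDr.
rewrite -lnXn // ler_ln ?posrE ?exprn_gt0 //; [by rewrite mulrC ind | by rewrite mulrC].
Qed.

Theorem proposition4p5 (R : realType) (G : groupType) (H S : set G) :
  hecke_pair H -> finite_set S -> generates_pair H S ->
  forall l : G -> R, length_function H l -> subexponential_growth H l ->
  amenable_pair R H.
Proof.
move=> [hH _] _ _ l hl [fin hlim] E hE Q cQ cvx a ha [q0 Qq0 fixq0].
case: hl => l1 l0 lV lM lH.
set N := growth H l.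
set A := fun r => fset_set (ball_cosets H l r).
have memA r C : 0 <= r -> (C \in A r) <-> ball_cosets H l r C.
  move=> r0; rewrite /A in_fset_set; last exact: fin.
  by rewrite in_setE.
have N0 r : 0 <= r -> (0 < N r)%N.
  move=> r0; have h1 : rcoset H 1%g \in A r by apply/memA => //; exists 1%g; rewrite ?l1.
  by rewrite /N /growth -/(A r) (cardfsD1 (rcoset H 1%g)) h1.
have AD r s : 0 <= r -> r <= s -> (A r `<=` A s)%fset.
  move=> r0 rs; apply/fsubsetP => C /(memA _ _ r0) [x lx ->].
  by apply/memA; [exact: le_trans rs | exists x => //; exact: le_trans rs].
have rsex n : exists r : R, 0 <= r /\ ((N (r + n.+1%:R))%:R <= (1 + n.+1%:R^-1) * (N r)%:R :> R).
  have e0 : 0 < n.+1%:R^-1 :> R by rewrite invr_gt0 ltr0Sn.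
  have [r r0 hr] := @growth_step R N N0 hlim n.+1%:R n.+1%:R^-1 (ltr0Sn _ _) e0.
  by exists r; split.
have [rs hrs] := choice rsex.
set q := fun n => avg (phi H a q0) (A (rs n)).
have Qq n : Q (q n).
  have [h _] := avg_props cvx (f := phi H a q0) (s := A (rs n)) (N0 _ (proj1 (hrs n)))
    (fun C _ => phiQ H ha Qq0 C).
  exact: h.
have [U [UU sub]] := @ultraFilterLemma nat \oo _.
have [p Qp qp] := ultra_lim UU cQ Qq.
exists p => // g.
have ex n : exists w : R * E * E, [/\ Q w.1.2, Q w.2, 0 <= w.1.1 &
   (l g <= n.+1%:R -> w.1.1 <= n.+1%:R^-1 /\ a g (q n) = q n + w.1.1 *: (w.1.2 - w.2))].
  have [hg|hg] := boolP (l g <= n.+1%:R); last first.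
    by exists (0, q0, q0); split => //= h; rewrite h in hg.
  have [r0 hr] := hrs n.
  have HA : forall C, C \in A (rs n) -> exists x, C = rcoset H x.
    by move=> C /(memA _ _ r0) [x _ ->]; exists x.
  have r1 : 0 <= rs n + n.+1%:R by rewrite addr_ge0.
  have HD : forall C, C \in A (rs n) -> rtr g C \in A (rs n + n.+1%:R).
    move=> C /(memA _ _ r0) [x lx ->]; apply/memA => //.
    exists (x * g^-1)%g; last exact: rtr_rcoset.
    by apply: le_trans (lM _ _) _; rewrite lV; exact: lerD.
  have [k [u [v [Qu Qv hk he]]]] := estimate hH ha Qq0 fixq0 cvx (g := g)
    (N0 _ r0) HA HD (AD _ _ r0 (ler_wpDr (ler0n R n.+1) (lexx (rs n)))).
  exists (k%:R / (N (rs n))%:R, u, v); split => //= _; split => //.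
  have Np : 0 < (N (rs n))%:R :> R by rewrite ltr0n N0.
  rewrite ler_pdivrMr //.
  have cle : (N (rs n) <= N (rs n + n.+1%:R)%R)%N.
    by apply: fsubset_leq_card; apply: AD => //; rewrite lerDl ler0n.
  have hkR : k%:R <= (N (rs n + n.+1%:R))%:R - (N (rs n))%:R :> R.
    by rewrite -natrB // ler_nat.
  move: hkR hr; set M := (N (rs n + n.+1%:R))%:R; set Nr := (N (rs n))%:R.
  set e := n.+1%:R^-1; move=> hkR hr; nra.
have [w hw] := choice ex.
have [K hK] : exists K : nat, l g <= K%:R.
  by exists (Num.Def.archi_bound (l g)); exact: ltW (archi_boundP (l0 g)).
have ev : \forall n \near \oo, l g <= n.+1%:R.
  exists K => // n /= Kn; apply: le_trans hK _; rewrite ler_nat; exact: leqW.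
have bc : {within Q, continuous (a g)} by case: ha.
have t0 : (fun n => (w n).1.1) @ \oo --> (0 : R^o).
  apply: (@squeeze_cvgr _ _ _ _ (fun _ => 0) (fun n => n.+1%:R^-1)).
  - apply: filterS ev => n hn; have [_ _ h0 h1] := hw n.
    by rewrite h0 /=; exact: (proj1 (h1 hn)).
  - exact: cvg_cst.
  - exact: cvg_harmonic.
apply: (fix_lemma hE cQ bc UU Qq Qp qp (t := fun n => (w n).1.1)
   (u := fun n => (w n).1.2) (v := fun n => (w n).2)).
- by move=> n; have [] := hw n.
- by move=> n; have [] := hw n.
- by apply: cvg_trans t0; move=> P hP; exact: sub.
- apply: sub; apply: filterS ev => n hn; have [_ _ _ h1] := hw n; exact: (proj2 (h1 hn)).
Qed.
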